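(* For every integer $n\ge 1$ and every real (or complex) number $t$, $$\det\bigl(C_{n,t}\cdot_L D_{n,t}\bigr) \;=\; -\bigl(F_{n+1}t+F_n\bigr)\bigl(F_{2n-1}t+F_{2n}\bigr)\;=\;-F_{n+1}F_{2n-1}\,t^{2}-\bigl(F_{n+1}F_{2n}+F_{n}F_{2n-1}\bigr)t-F_{n}F_{2n}.$$ In particular the first terms are $-t^2-2t-1,\ -4t^2-8t-3,\ -15t^2-34t-16$ for $n=1,2,3$.
   Context: $F_k$ denotes the Fibonacci numbers: $F_0=0$, $F_1=F_2=1$, $F_k=F_{k-1}+F_{k-2}$. Lorentz matrix product: for $A=[a_{ij}]$ of size $m\times n$ and $B=[b_{jk}]$ of size $n\times p$, $A\cdot_L B$ is the $m\times p$ matrix with $(i,k)$ entry $-a_{i1}b_{1k}+\sum_{j=2}^{n}a_{ij}b_{jk}$ (equivalently $A\cdot_L B=A\,\mathrm{diag}(-1,1,\dots,1)\,B$). $C_{n,t}$ is the $n\times n$ matrix with entries $c_{ij}$: $c_{ii}=2$ for $1\le i\le n-1$, $c_{nn}=t+1$, $c_{i,i+1}=1$ for $1\le i\le n-1$, $c_{ij}=1$ for all $i>j$, and $c_{ij}=0$ for $j>i+1$. (For $n=1$, $C_{1,t}=(t+1)$.) $D_{n,t}$ is the $n\times n$ matrix obtained from $C_{n,t}$ by replacing every superdiagonal entry $1$ by $-1$: entries $d_{ii}=2$ for $i\le n-1$, $d_{nn}=t+1$, $d_{i,i+1}=-1$, $d_{ij}=1$ for $i>j$, $d_{ij}=0$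 for $j>i+1$. (For $n=1$, $D_{1,t}=(t+1)$.) *)

(* Defs.v *)
From mathcomp Require Import all_boot all_order all_algebra.
Set Implicit Arguments. Unset Strict Implicit. Unset Printing Implicit Defensive.
Import GRing.Theory.
Local Open Scope ring_scope.

Fixpoint fib (k : nat) : nat :=
  match k with
  | 0 => 0
  | 1 => 1
  | (k'.+1 as k1).+1 => fib k1 + fib k'
  end.

Definition lorentz_mul (R : pzRingType) m n p (A : 'M[R]_(m, n)) (B : 'M[R]_(n, p))
  : 'M[R]_(m, p) :=
  A *m diag_mx (\row_(j < n) (if val j == 0 then -1 else 1)) *m B.

(* C_{n,t} with 0-based indices i,j < n (paper's i = i+1):
   diagonal 2 except last entry t+1; superdiagonal 1; strictly lower part 1;
   above superdiagonal 0. *)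
Definition Cmat (R : pzRingType) (n : nat) (t : R) : 'M[R]_n :=
  \matrix_(i < n, j < n)
    if i == j then (if val i == n.-1 then t + 1 else 2)
    else if val j == (val i).+1 then 1
    else if (val j < val i)%N then 1 else 0.

Definition Dmat (R : pzRingType) (n : nat) (t : R) : 'M[R]_n :=
  \matrix_(i < n, j < n)
    if i == j then (if val i == n.-1 then t + 1 else 2)
    else if val j == (val i).+1 then -1
    else if (val j < val i)%N then 1 else 0.

(* Main.v *)
Require Import Defs.
From mathcomp Require Import all_boot all_order all_algebra.
From mathcomp Require Import ring zify.
Import GRing.Theory.
Set Implicit Arguments. Unset Strict Implicit. Unset Printing Implicit Defensive.
Local Open Scope ring_scope.

Definition Xm (R : comNzRingType) (m : nat) (s a t : R) : 'M[R]_m :=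
  \matrix_(i < m, j < m)
    if i == j then (if val i == m.-1 then t + 1 else if val i == 0%N then a else 2)
    else if val j == (val i).+1 then s
    else if (val j < val i)%N then 1 else 0.

Lemma Xm_row0 (R : comNzRingType) m (s a t : R) (j : 'I_m.+2) :
  Xm m.+2 s a t 0 j = if val j == 0%N then a else if val j == 1%N then s else 0.
Proof.
rewrite mxE; case: j => [[|[|j]] Hj] //=.
Qed.

Lemma Xm_expand (R : comNzRingType) m (s a t : R) :
  \det (Xm m.+2 s a t) =
  a * \det (row' 0 (col' 0 (Xm m.+2 s a t))) - s * \det (row' 0 (col' 1 (Xm m.+2 s a t))).
Proof.
rewrite (expand_det_row _ 0) big_ord_recl big_ord_recl big1 ?addr0.
  rewrite !Xm_row0 /= /cofactor /= expr0 mul1r expr1 mulN1r mulrN.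
  by rewrite /bump /=.
move=> i _; rewrite Xm_row0 /= mul0r //.
Qed.

Lemma minor00 (R : comNzRingType) m (s a t : R) :
  row' 0 (col' 0 (Xm m.+3 s a t)) = Xm m.+2 s 2 t.
Proof.
apply/matrixP => i j; rewrite !mxE -!val_eqE /= /bump /=.
case: i j => [i Hi] [j Hj] /=; rewrite !add1n.
case: (i =P j) => [->|Hne].
  by rewrite !eqxx /= eqSS; case: (j == 0%N).
rewrite !eqSS ltnS.
have -> : (i == j) = false by apply/eqP; lia.
by [].
Qed.

Lemma minor01 (R : comNzRingType) m (s a t : R) :
  row' 0 (col' 1 (Xm m.+3 s a t)) = Xm m.+2 s 1 t.
Proof.
apply/matrixP => i j; rewrite !mxE -!val_eqE /= /bump /=.
case: i j => [i Hi] [j Hj] /=; rewrite add1n.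
case: j Hj => [|j] Hj /=.
  by case: i Hi.
rewrite add1n !eqSS ltnS.
case: (i =P j.+1) => [->|Hne] //=.
Qed.

Lemma Xm_rec (R : comNzRingType) m (s a t : R) :
  \det (Xm m.+3 s a t) = a * \det (Xm m.+2 s 2 t) - s * \det (Xm m.+2 s 1 t).
Proof. by rewrite Xm_expand minor00 minor01. Qed.

Lemma Xm_base (R : comNzRingType) (s a t : R) :
  \det (Xm 2 s a t) = a * (t + 1) - s.
Proof.
rewrite Xm_expand !det_mx11 !mxE /=.
by rewrite mulr1.
Qed.

Lemma Xm1 (R : comNzRingType) (s a t : R) : \det (Xm 1 s a t) = t + 1.
Proof. by rewrite det_mx11 mxE. Qed.

Lemma fibSS k : fib k.+2 = (fib k.+1 + fib k)%N.
Proof. by []. Qed.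

Lemma C_closed (R : comNzRingType) m (t : R) :
  \det (Xm m.+2 1 2 t) = (fib m.+3)%:R * t + (fib m.+2)%:R /\
  \det (Xm m.+2 1 1 t) = (fib m.+1)%:R * t + (fib m)%:R.
Proof.
elim: m => [|m [IH1 IH2]].
  rewrite !Xm_base /=; split; ring.
rewrite !Xm_rec IH1 IH2.
rewrite !fibSS !natrD.
split; ring.
Qed.

Lemma D_closed (R : comNzRingType) m (t : R) :
  \det (Xm m.+2 (-1) 2 t) = (fib (2 * m).+3)%:R * t + (fib (2 * m).+4)%:R /\
  \det (Xm m.+2 (-1) 1 t) = (fib (2 * m).+2)%:R * t + (fib (2 * m).+3)%:R.
Proof.
elim: m => [|m [IH1 IH2]].
  rewrite !Xm_base /=; split; ring.
rewrite !Xm_rec IH1 IH2.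
have -> : (2 * m.+1 = (2 * m).+2)%N by lia.
set k := (2 * m)%N.
rewrite !fibSS !natrD.
split; ring.
Qed.

Lemma CX (R : comNzRingType) n (t : R) : Cmat n t = Xm n 1 2 t.
Proof. by apply/matrixP => i j; rewrite !mxE; case: (val i == 0%N). Qed.

Lemma DX (R : comNzRingType) n (t : R) : Dmat n t = Xm n (-1) 2 t.
Proof. by apply/matrixP => i j; rewrite !mxE; case: (val i == 0%N). Qed.

Theorem mainTheorem1 (R : comNzRingType) (n : nat) (t : R) :
  (1 <= n)%N ->
  \det (lorentz_mul (Cmat n t) (Dmat n t))
  = - (((fib n.+1)%:R * t + (fib n)%:R) * ((fib (2 * n).-1)%:R * t + (fib (2 * n))%:R)).
Proof.
case: n => [//|n] _.
case: n => [|m].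
  rewrite /lorentz_mul !det_mulmx det_diag big_ord1 CX DX !Xm1 mxE /=; ring.
have -> : ((2 * m.+2).-1 = (2 * m).+3)%N by lia.
have -> : ((2 * m.+2) = (2 * m).+4)%N by lia.
rewrite /lorentz_mul !det_mulmx det_diag big_ord_recl big1; last first.
  by move=> i _; rewrite mxE.
rewrite mxE mulr1 CX DX.
have [C1 _] := C_closed m t.
have [D1 _] := D_closed m t.
rewrite C1 D1 /=.
ring.
Qed.
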